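(* Let $Y$ be a real normed linear space and let $T\in L(\ell_1^n,Y)$, $T\neq\theta$, be approximately smooth (i.e. $\varepsilon$-smooth for some $\varepsilon\in[0,2)$). Then $M_T=\{\pm u\}$ for some $u\in\operatorname{Ext}B_{\ell_1^n}$.
   Context: $\ell_1^n$ is $\mathbb{R}^n$ with the $\ell_1$ norm; $L(\ell_1^n,Y)$ is the space of bounded linear operators with operator norm, and smoothness refers to $T$ as an element of this space. For a normed space $Z$ and $z\neq\theta$, $J(z)=\{\phi\in S_{Z^*}:\phi(z)=\|z\|\}$, and $z$ is $\varepsilon$-smooth if $\sup_{\phi,\psi\in J(z)}\|\phi-\psi\|\le\varepsilon$. $M_T=\{x\in S_{\ell_1^n}:\|Tx\|=\|T\|\}$; $\operatorname{Ext}B_{\ell_1^n}$ is the set of extreme points of the closed unit ball of $\ell_1^n$. *)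

(* Defs.v *)
From HB Require Import structures.
From mathcomp Require Import all_boot all_order all_algebra.
From mathcomp Require Import all_classical all_reals all_analysis.
Set Implicit Arguments. Unset Strict Implicit. Unset Printing Implicit Defensive.
Import Order.TTheory GRing.Theory Num.Theory.
Import numFieldNormedType.Exports.
Local Open Scope classical_set_scope.
Local Open Scope ring_scope.

(* ell_1^n : row vectors 'rV[R]_n with the ell_1 norm *)
Definition norm1 {R : realType} {n : nat} (x : 'rV[R]_n) : R :=
  \sum_(i < n) `|x 0 i|.

Definition ball1 {R : realType} {n : nat} : set 'rV[R]_n :=
  [set x | norm1 x <= 1].

Definition ExtB1 {R : realType} {n : nat} : set 'rV[R]_n :=
  [set x | ball1 x /\
     forall (y z : 'rV[R]_n) (t : R), ball1 y -> ball1 z -> 0 < t < 1 ->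
       x = t *: y + (1 - t) *: z -> y = z].

(* linear maps ell_1^n -> Y  (all of them are bounded: finite dimension) *)
Definition islin {R : realType} {n : nat} {Y : normedModType R}
  (T : 'rV[R]_n -> Y) : Prop :=
  forall (a : R) (x y : 'rV[R]_n), T (a *: x + y) = a *: T x + T y.

Definition opnorm {R : realType} {n : nat} {Y : normedModType R}
  (T : 'rV[R]_n -> Y) : R :=
  sup [set `|T x| | x in (@ball1 R n)].

(* continuous linear functionals on Z = L(ell_1^n, Y);
   a functional is only evaluated on linear maps *)
Definition islinfun {R : realType} {n : nat} {Y : normedModType R}
  (phi : ('rV[R]_n -> Y) -> R) : Prop :=
  (forall (a : R) (S T : 'rV[R]_n -> Y), islin S -> islin T ->
     phi (fun x => a *: S x + T x) = a * phi S + phi T) /\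
  (exists C : R, forall T, islin T -> `|phi T| <= C * opnorm T).

Definition dualnorm {R : realType} {n : nat} {Y : normedModType R}
  (phi : ('rV[R]_n -> Y) -> R) : R :=
  sup [set `|phi T| | T in [set T : 'rV[R]_n -> Y | islin T /\ opnorm T <= 1]].

Definition Jset {R : realType} {n : nat} {Y : normedModType R}
  (T : 'rV[R]_n -> Y) : set (('rV[R]_n -> Y) -> R) :=
  [set phi | islinfun phi /\ dualnorm phi = 1 /\ phi T = opnorm T].

Definition eps_smooth {R : realType} {n : nat} {Y : normedModType R}
  (eps : R) (T : 'rV[R]_n -> Y) : Prop :=
  forall phi psi, Jset T phi -> Jset T psi ->
    dualnorm (fun S => phi S - psi S) <= eps.

Definition MT {R : realType} {n : nat} {Y : normedModType R}
  (T : 'rV[R]_n -> Y) : set 'rV[R]_n :=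
  [set x | norm1 x = 1 /\ `|T x| = opnorm T].

(* Main.v *)
Require Import Defs.
From HB Require Import structures.
From mathcomp Require Import all_boot all_order all_algebra.
From mathcomp Require Import all_classical all_reals all_analysis.
From mathcomp Require Import lra.
Set Implicit Arguments. Unset Strict Implicit. Unset Printing Implicit Defensive.
Import Order.TTheory GRing.Theory Num.Theory.
Import numFieldNormedType.Exports.
Local Open Scope classical_set_scope.
Local Open Scope ring_scope.

Section HBS.
Variables (R : realType) (Y : normedModType R) (y0 : Y).

Definition closedG (G : set (Y * R)) :=
  forall a p q, G p -> G q -> G (a *: p.1 + q.1, a * p.2 + q.2).
Definition domG (G : set (Y * R)) := forall p, G p -> p.2 <= `|p.1|.
Definition PG (G : set (Y * R)) :=
  closedG G /\ domG G /\ (forall p, G p -> G (y0, `|y0|)).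

Lemma G_zero G : closedG G -> G (y0, `|y0|) -> G (0, 0).
Proof.
move=> cG H; have := cG (-1) _ _ H H => /=.
by rewrite scaleN1r mulN1r !addNr.
Qed.

Lemma G_uniq G : closedG G -> domG G -> forall y r s, G (y, r) -> G (y, s) -> r = s.
Proof.
move=> cG dG y r s Hr Hs.
have h1 := dG _ (cG (-1) _ _ Hs Hr); have h2 := dG _ (cG (-1) _ _ Hr Hs).
move: h1 h2 => /=; rewrite scaleN1r !addNr normr0 => h1 h2.
lra.
Qed.


Lemma G_ext G z : PG G -> G (y0, `|y0|) -> ~ (exists r, G (z, r)) ->
  exists G', PG G' /\ G `<` G'.
Proof.
move=> [cG [dG _]] Gy0 nz.
have G00 := G_zero cG Gy0.
have core : forall p q, G p -> G q -> p.2 - `|p.1 - z| <= `|q.1 + z| - q.2.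
  move=> p q Gp Gq; have := dG _ (cG 1 _ _ Gp Gq) => /=.
  rewrite scale1r mul1r => h.
  have : `|p.1 + q.1| <= `|p.1 - z| + `|q.1 + z|.
    have -> : p.1 + q.1 = (p.1 - z) + (q.1 + z) by rewrite addrACA addNr addr0.
    exact: ler_normD.
  lra.
pose E := [set p.2 - `|p.1 - z| | p in G].
pose c := sup E.
have H1 : forall p, G p -> p.2 - `|p.1 - z| <= c.
  move=> p Gp; apply: ub_le_sup; last by exists p.
  exists (`|(0:Y) + z| - 0) => _ [q Gq <-]; exact: (core q (0,0)).
have H2 : forall q, G q -> c <= `|q.1 + z| - q.2.
  move=> q Gq; apply: ge_sup; first by exists (0 - `|(0:Y) - z|), (0,0).
  by move=> _ [p Gp <-]; exact: core.
have key : forall y r t, G (y, r) -> r + t * c <= `|y + t *: z|.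
  move=> y r t Gyr.
  have [t0|t0|->] := ltgtP t 0; last first.
  - by rewrite mul0r scale0r !addr0; exact: (dG _ Gyr).
  - have Gs := cG t^-1 _ _ Gyr G00; move: Gs => /=; rewrite !addr0 => Gs.
    have := H2 _ Gs => /= h.
    have e : `|y + t *: z| = t * `|t^-1 *: y + z|.
      rewrite -[X in X * _](gtr0_norm t0) -normrZ scalerDr scalerA mulfV ?scale1r //.
      by rewrite gt_eqF.
    rewrite e.
    have : t * c <= t * (`|t^-1 *: y + z| - t^-1 * r) by rewrite ler_pM2l.
    rewrite mulrBr mulrA mulfV ?mul1r ?gt_eqF //; lra.
  - have s0 : 0 < - t by rewrite oppr_gt0.
    have Gs := cG (- t)^-1 _ _ Gyr G00; move: Gs => /=; rewrite !addr0 => Gs.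
    have := H1 _ Gs => /= h.
    have e : `|y + t *: z| = - t * `|(- t)^-1 *: y - z|.
      rewrite -[X in X * _](gtr0_norm s0) -normrZ scalerDr scalerA mulfV ?scale1r ?gt_eqF //.
      by rewrite scalerN scaleNr opprK.
    rewrite e.
    have : - t * ((- t)^-1 * r - `|(- t)^-1 *: y - z|) <= - t * c by rewrite ler_pM2l.
    rewrite mulrBr mulrA mulfV ?mul1r ?gt_eqF //; lra.
pose G' := [set q | exists p t, G p /\ q = (p.1 + t *: z, p.2 + t * c)].
exists G'; split; last split.
- split; last split.
  + move=> a _ _ [p [t [Gp ->]]] [q [s [Gq ->]]] /=.
    exists (a *: p.1 + q.1, a * p.2 + q.2), (a * t + s); split; first exact: cG.
    congr pair => /=.
      by rewrite scalerDr scalerA scalerDl addrACA.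
    by rewrite mulrDr mulrA mulrDl addrACA.
  + move=> _ [[y r] [t [Gp ->]]] /=; exact: key.
  + move=> _ _; exists (y0, `|y0|), 0; split => //.
    by rewrite scale0r mul0r !addr0.
- move=> p Gp; exists p, 0; split => //.
  by rewrite scale0r mul0r !addr0; case: p {Gp}.
- move=> /(_ (z, c)) h; apply: nz; exists c; apply: h.
  by exists (0, 0), 1; rewrite /= scale1r mul1r !add0r.
Qed.


Lemma HB_norming : exists f : Y -> R,
  (forall a x y, f (a *: x + y) = a * f x + f y) /\
  (forall y, f y <= `|y|) /\ f y0 = `|y0|.
Proof.
have [A [PA Amax]] : exists A, PG A /\ forall B, A `<` B -> ~ PG B.
  apply: Zorn_bigcup => F FP Ftot; split; last split.
  - move=> a p q [X FX Xp] [W FW Wq].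
    have [XW|WX] := Ftot _ _ FX FW.
    + exists W => //; have [cW _] := FP _ FW; apply: cW => //; exact: XW.
    + exists X => //; have [cX _] := FP _ FX; apply: cX => //; exact: WX.
  - move=> p [X FX Xp]; have [_ [dX _]] := FP _ FX; exact: dX.
  - move=> p [X FX Xp]; have [_ [_ hX]] := FP _ FX; exists X => //; exact: (hX p Xp).
have [cA [dA hA]] := PA.
have Ay0 : A (y0, `|y0|).
  apply: contrapT => nA.
  pose G0 := [set q : Y * R | exists a, q = (a *: y0, a * `|y0|)].
  apply: (Amax G0); last first.
    split; last split.
    - move=> a _ _ [b ->] [d ->] /=; exists (a * b + d).
      by rewrite scalerDl scalerA mulrDl mulrA.
    - move=> _ [b ->] /=; rewrite normrZ ler_wpM2r //; exact: ler_norm.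
    - by move=> _ _; exists 1; rewrite scale1r mul1r.
  split.
  - by move=> p Ap; exfalso; apply: nA; exact: (hA p Ap).
  - by move=> /(_ (y0, `|y0|)) h; apply: nA; apply: h; exists 1; rewrite scale1r mul1r.
have tot : forall z, exists r, A (z, r).
  move=> z; apply: contrapT => nz.
  have [G' [PG' AG']] := G_ext PA Ay0 nz.
  exact: (Amax _ AG' PG').
pose f := fun z => proj1_sig (cid (tot z)).
have fA : forall z, A (z, f z) by move=> z; rewrite /f; case: cid.
exists f; split; last split.
- move=> a x y; apply: (G_uniq cA dA (fA _)).
  exact: (cA a _ _ (fA x) (fA y)).
- by move=> y; exact: (dA _ (fA y)).
- exact: (G_uniq cA dA (fA _) Ay0).
Qed.

End HBS.
Section Ops.
Variables (R : realType) (n : nat) (Y : normedModType R).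
Implicit Types (S : 'rV[R]_n -> Y) (x : 'rV[R]_n).

Definition ev (i : 'I_n) : 'rV[R]_n := delta_mx 0 i.

Lemma ev_coord i j : ev i 0 j = (i == j)%:R.
Proof. by rewrite /ev mxE eqxx /= eq_sym. Qed.

Lemma norm1_ev i : norm1 (ev i) = 1.
Proof.
rewrite /norm1 (bigD1 i) //= ev_coord eqxx normr1 big1 ?addr0 // => j ji.
by rewrite ev_coord eq_sym (negbTE ji) normr0.
Qed.

Lemma norm1_ge0 x : 0 <= norm1 x.
Proof. by apply: sumr_ge0 => i _. Qed.

Lemma norm1_0 : norm1 (0 : 'rV[R]_n) = 0.
Proof. by rewrite /norm1 big1 // => i _; rewrite mxE normr0. Qed.

Lemma lin0 S : islin S -> S 0 = 0.
Proof.
move=> L; have := L 1 0 0; rewrite scale1r addr0 scale1r => h.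
have h' : S 0 + S 0 - S 0 = S 0 - S 0 by rewrite -h.
by rewrite addrK subrr in h'.
Qed.

Lemma linZ S a x : islin S -> S (a *: x) = a *: S x.
Proof. by move=> L; have := L a x 0; rewrite !addr0 lin0 // addr0. Qed.

Lemma linD S x y : islin S -> S (x + y) = S x + S y.
Proof. by move=> L; have := L 1 x y; rewrite !scale1r. Qed.

Lemma lin_sum S (F : 'I_n -> 'rV[R]_n) : islin S ->
  S (\sum_i F i) = \sum_i S (F i).
Proof.
move=> L; elim/big_rec2: _ => [|i y1 y2 _ <-]; first exact: lin0.
exact: linD.
Qed.

Lemma lin_decomp S x : islin S -> S x = \sum_i x 0 i *: S (ev i).
Proof.
move=> L; rewrite {1}(row_sum_delta x) lin_sum //.
by apply: eq_bigr => i _; rewrite linZ.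
Qed.

Lemma lin_bound S x c : islin S -> (forall i, `|S (ev i)| <= c) ->
  `|S x| <= norm1 x * c.
Proof.
move=> L H; rewrite lin_decomp // /norm1 mulr_suml.
apply: le_trans (ler_norm_sum _ _ _) _.
apply: ler_sum => i _; rewrite normrZ; apply: ler_wpM2l => //.
Qed.

Lemma opnorm_le S c : islin S -> 0 <= c -> (forall i, `|S (ev i)| <= c) ->
  opnorm S <= c.
Proof.
move=> L c0 H; apply: ge_sup; first by exists `|S 0|, 0; rewrite // /ball1 /= norm1_0.
move=> _ [x bx <-]; apply: le_trans (lin_bound x L H) _.
by rewrite -{2}(mul1r c) ler_wpM2r.
Qed.

Lemma opnorm_ub S x : islin S -> ball1 x -> `|S x| <= opnorm S.
Proof.
move=> L bx; apply: ub_le_sup; last by exists x.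
exists (\sum_j `|S (ev j)|) => _ [y byy <-].
have H : forall i, `|S (ev i)| <= \sum_j `|S (ev j)|.
  move=> i; rewrite (bigD1 i) //= lerDl; exact: sumr_ge0.
apply: le_trans (lin_bound y L H) _.
by rewrite -{2}(mul1r (\sum_j _)) ler_wpM2r // sumr_ge0.
Qed.

Lemma opnorm_ge0 S : islin S -> 0 <= opnorm S.
Proof.
move=> L; apply: le_trans (opnorm_ub L (_ : ball1 0)); first by [].
by rewrite /ball1 /= norm1_0.
Qed.

Lemma opnorm_ev S i : islin S -> `|S (ev i)| <= opnorm S.
Proof. by move=> L; apply: opnorm_ub => //; rewrite /ball1 /= norm1_ev. Qed.

Lemma opnorm_bound S x : islin S -> `|S x| <= norm1 x * opnorm S.
Proof. by move=> L; apply: lin_bound => // i; exact: opnorm_ev. Qed.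

End Ops.
Arguments ev {R n}.

Section Main.
Variables (R : realType) (n : nat) (Y : normedModType R).
Implicit Types (S : 'rV[R]_n -> Y).

Lemma argmax_ex (i1 : 'I_n) (F : 'I_n -> R) : exists i, forall j, F j <= F i.
Proof.
case: (@arg_maxP _ _ _ i1 predT F isT) => i _ H; exists i => j; exact: H.
Qed.

Lemma flin_props (f : Y -> R) : (forall a x y, f (a *: x + y) = a * f x + f y) ->
  (forall y, f y <= `|y|) ->
  (forall y, `|f y| <= `|y|) /\ (forall a y, f (a *: y) = a * f y) /\
  (forall x y, f (x + y) = f x + f y).
Proof.
move=> fL fb.
have f0 : f 0 = 0.
  have := fL 1 0 0; rewrite scale1r addr0 mul1r => h.
  have h' : f 0 + f 0 - f 0 = f 0 - f 0 by rewrite -h.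
  by rewrite addrK subrr in h'.
have fZ : forall a y, f (a *: y) = a * f y.
  by move=> a y; have := fL a y 0; rewrite !addr0 f0 addr0.
split; last split => //.
- move=> y; rewrite ler_norml fb andbT.
  have := fb (- y); rewrite -scaleN1r fZ normrZ normrN1 mul1r; lra.
- by move=> x y; have := fL 1 x y; rewrite scale1r mul1r.
Qed.

Lemma J_of (T : 'rV[R]_n -> Y) (f : Y -> R) (i : 'I_n) :
  islin T -> 0 < opnorm T ->
  (forall a x y, f (a *: x + y) = a * f x + f y) ->
  (forall y, f y <= `|y|) -> f (T (ev i)) = opnorm T ->
  Jset T (fun S => f (S (ev i))).
Proof.
move=> L M0 fL fb fT.
have [fn [fZ fD]] := flin_props fL fb.
have bnd : forall S, islin S -> `|f (S (ev i))| <= opnorm S.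
  move=> S LS; apply: le_trans (fn _) _; exact: opnorm_ev.
split; last split => //.
- split.
  + by move=> a S T' _ _; rewrite fL.
  + by exists 1 => S LS; rewrite mul1r; exact: bnd.
- pose S0 := fun x => (opnorm T)^-1 *: T x.
  have LS0 : islin S0.
    move=> a x y; rewrite /S0 L scalerDr !scalerA mulrC.
    by [].
  have S0n : opnorm S0 <= 1.
    apply: opnorm_le => // k; rewrite /S0 normrZ gtr0_norm ?invr_gt0 //.
    rewrite ler_pdivrMl // mulr1; exact: opnorm_ev.
  have v1 : `|f (S0 (ev i))| = 1.
    by rewrite /S0 fZ fT mulVf ?gt_eqF // normr1.
  apply/eqP; rewrite eq_le; apply/andP; split.
  + apply: ge_sup; first by exists 1, S0.
    move=> _ [S [LS nS] <-]; apply: le_trans (bnd S LS) nS.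
  + apply: ub_le_sup; last by exists S0.
    exists 1 => _ [S [LS nS] <-]; apply: le_trans (bnd S LS) nS.
Qed.

End Main.

Section Geo.
Variables (R : realType) (n : nat).
Implicit Types (x y z : 'rV[R]_n).

Lemma coord_norm x i : `|x 0 i| <= norm1 x.
Proof. by rewrite /norm1 (bigD1 i) //= lerDl; apply: sumr_ge0. Qed.

Lemma coord_one y z t i : ball1 y -> ball1 z -> 0 < t < 1 ->
  t * y 0 i + (1 - t) * z 0 i = 1 -> y 0 i = 1.
Proof.
rewrite /ball1 /= => hy0 hz0 /andP[t0 t1] e.
have hy := le_trans (ler_normlW (coord_norm y i)) hy0.
have hz := le_trans (ler_normlW (coord_norm z i)) hz0.
nra.
Qed.

Lemma unit_ev y i : norm1 y <= 1 -> y 0 i = 1 -> y = ev i.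
Proof.
move=> ny yi.
have rest : \sum_(k < n | k != i) `|y 0 k| = 0.
  apply/eqP; rewrite eq_le sumr_ge0 // andbT.
  by move: ny; rewrite /norm1 (bigD1 i) //= yi normr1 => h; lra.
apply/rowP => k; rewrite ev_coord.
case: (eqVneq i k) => [<-|ik]; first by rewrite yi.
apply/normr0_eq0; apply: (psumr_eq0P _ rest) => //; by rewrite eq_sym.
Qed.

Lemma norm1N x : norm1 (- x) = norm1 x.
Proof. by apply: eq_bigr => i _; rewrite mxE normrN. Qed.

End Geo.

Lemma lin_two (R : realType) (n : nat) (Y : normedModType R) (w1 w2 : Y) (i j : 'I_n) :
  islin (fun x : 'rV[R]_n => x 0 i *: w1 - x 0 j *: w2).
Proof.
move=> a x y; rewrite !mxE !scalerDl scalerBr !scalerA.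
by rewrite opprD addrACA.
Qed.

Unset Implicit Arguments.

Theorem proposition3p3 (R : realType) (n : nat) (Y : normedModType R)
  (T : 'rV[R]_n -> Y) :
  islin T -> ~ (forall x, T x = 0) ->
  (exists eps : R, 0 <= eps < 2 /\ eps_smooth eps T) ->
  exists u : 'rV[R]_n, ExtB1 u /\ MT T = [set u; - u].
Proof.
move=> L nT [eps [/andP[e0 e2] sm]].
have [i1 Ti1] : exists i, T (ev i) != 0.
  apply: contrapT => h; apply: nT => x; rewrite lin_decomp // big1 // => i _.
  have /negP : ~ (T (ev i) != 0) by move=> hi; apply: h; exists i.
  by rewrite negbK => /eqP ->; rewrite scaler0.
have [i0 Hmax] := argmax_ex i1 (fun i => `|T (ev i)|).
move: Hmax => /= Hmax.
set M := `|T (ev i0)| in Hmax.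
have opM : opnorm T = M.
  apply/eqP; rewrite eq_le opnorm_ev // andbT; exact: (opnorm_le L (normr_ge0 _) Hmax).
have M0 : 0 < M by apply: lt_le_trans (Hmax i1); rewrite normr_gt0.
case: (pselect (exists j, j != i0 /\ `|T (ev j)| = M)) => [[j [ji Mj]] | nj].
  exfalso.
  have [f [fL [fb fy]]] := HB_norming (T (ev i0)).
  have [g [gL [gb gy]]] := HB_norming (T (ev j)).
  have [fn [fZ fD]] := flin_props fL fb.
  have [gn [gZ gD]] := flin_props gL gb.
  have Mpos : 0 < opnorm T by rewrite opM.
  have Jf := J_of L Mpos fL fb (_ : f (T (ev i0)) = opnorm T).
  have Jg := J_of L Mpos gL gb (_ : g (T (ev j)) = opnorm T).
  have := sm _ _ (Jf ltac:(by rewrite fy opM)) (Jg ltac:(by rewrite gy opM Mj)).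
  apply/negP; rewrite -ltNge; apply: lt_le_trans e2 _.
  pose w1 := M^-1 *: T (ev i0); pose w2 := M^-1 *: T (ev j).
  have nw1 : `|w1| = 1 by rewrite normrZ gtr0_norm ?invr_gt0 // mulVf ?gt_eqF.
  have nw2 : `|w2| = 1 by rewrite normrZ gtr0_norm ?invr_gt0 // Mj mulVf ?gt_eqF.
  pose S2 := fun x : 'rV[R]_n => x 0 i0 *: w1 - x 0 j *: w2.
  have LS2 : islin S2.
    exact: lin_two.
  have S2e : forall k, S2 (ev k) = (i0 == k)%:R *: w1 - (j == k)%:R *: w2.
    by move=> k; rewrite /S2 /= !ev_coord (eq_sym k i0) (eq_sym k j).
  have S2n : opnorm S2 <= 1.
    apply: opnorm_le => // k; rewrite S2e.
    case: (eqVneq i0 k) => [<-|ik].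
      by rewrite (negbTE ji) scale0r subr0 scale1r nw1.
    case: (eqVneq j k) => [_|jk]; first by rewrite scale0r scale1r sub0r normrN nw2.
    by rewrite !scale0r subr0 normr0.
  have v2 : f (S2 (ev i0)) - g (S2 (ev j)) = 2.
    rewrite !S2e !eqxx (negbTE ji) eq_sym (negbTE ji) !scale0r subr0 !scale1r sub0r.
    rewrite -[- w2]scaleN1r gZ /w1 /w2 fZ gZ fy gy Mj mulVf ?gt_eqF //; lra.
  have bnd : forall S, islin S -> opnorm S <= 1 ->
      `|f (S (ev i0)) - g (S (ev j))| <= 2.
    move=> S LS nS; apply: le_trans (ler_normB _ _) _.
    have := le_trans (fn _) (opnorm_ev i0 LS).
    have := le_trans (gn _) (opnorm_ev j LS); lra.
  apply: ub_le_sup.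
    by exists 2 => _ [S [LS nS] <-]; exact: bnd.
  by exists S2 => //; rewrite v2 ger0_norm.
have lt : forall k, k != i0 -> `|T (ev k)| < M.
  move=> k ki; rewrite lt_neqAle Hmax andbT; apply/eqP => e; apply: nj.
  by exists k.
exists (ev i0); split.
  split; first by rewrite /ball1 /= norm1_ev.
  move=> y z t hy hz /andP[t0 t1] e.
  have ec := congr1 (fun v : 'rV[R]_n => v 0 i0) e.
  move: ec; rewrite /= ev_coord eqxx /= mulr1n !mxE => ec.
  have ey : y 0 i0 = 1.
    by apply: (coord_one hy hz (_ : 0 < t < 1)); [rewrite t0 t1 | lra].
  have ez : z 0 i0 = 1.
    apply: (coord_one hz hy (_ : 0 < 1 - t < 1)); [apply/andP; split; lra | lra].
  by rewrite (unit_ev hy ey) (unit_ev hz ez).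
apply/seteqP; split.
  move=> x [nx Tx]; rewrite opM in Tx.
  have xk : forall k, k != i0 -> x 0 k = 0.
    move=> k ki; apply: contrapT => xk0.
    have : `|T x| < M.
      rewrite lin_decomp //; apply: le_lt_trans (ler_norm_sum _ _ _) _.
      have -> : M = \sum_i `|x 0 i| * M by rewrite -mulr_suml -/(norm1 x) nx mul1r.
      rewrite (bigD1 k) //= [X in _ < X](bigD1 k) //=.
      apply: ltr_leD.
        have xp : 0 < `|x 0 k| by rewrite normr_gt0; apply/eqP.
        by rewrite normrZ ltr_pM2l //; exact: lt.
      apply: ler_sum => i _; rewrite normrZ ler_wpM2l //.
    by rewrite Tx ltxx.
  have xe : x = x 0 i0 *: ev i0.
    apply/rowP => k; rewrite mxE ev_coord.
    case: (eqVneq i0 k) => [<-|ik]; first by rewrite mulr1.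
    by rewrite mulr0 xk // eq_sym.
  have h : `|x 0 i0| = 1.
    rewrite -nx /norm1 (bigD1 i0) //= big1 ?addr0 // => k ki.
    by rewrite xk // normr0.
  case: (lerP 0 (x 0 i0)) => h0; [rewrite (ger0_norm h0) in h | rewrite (ltr0_norm h0) in h].
  - by rewrite /setU /=; left; rewrite xe h scale1r.
  - by rewrite /setU /=; right; rewrite xe -[x 0 i0]opprK h scaleN1r.
move=> x [->|->]; split.
- exact: norm1_ev.
- by rewrite opM.
- by rewrite norm1N norm1_ev.
- by rewrite -scaleN1r linZ // scaleN1r normrN opM.
Qed.
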